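(* Let $k\ge 2$ be an integer, let $N\ge 2k-1$ be an integer, and let $\tau\colon\{0,1\}^*\to\{0,1,\#\}^*$ be the $N$-uniform substitution defined by $\tau(0)=\#0^{k-2}0^{N-2k+2}0^{k-1}$ and $\tau(1)=\#0^{k-2}1^{N-2k+2}0^{k-1}$. Let $\mathbf{w}$ be an infinite binary word. If $u_0\cdots u_{e-1}$ with $e\ge N$ is a $k$-abelian power occurring in $\tau(\mathbf{w})$, then $N$ divides $|u_0|$.
   Context: For finite words $u,x$, $|u|_x$ denotes the number of occurrences of $x$ as a factor of $u$. Two finite words $u,v$ are $k$-abelian equivalent, written $u\sim_k v$, if $|u|_x=|v|_x$ for every nonempty word $x$ of length at most $k$. A $k$-abelian power of exponent $e$ (a positive integer) and period $m$ is a nonempty word $u_0\cdots u_{e-1}$ with $|u_0|=m$ and $u_0\sim_k\cdots\sim_k u_{e-1}$. The image $\tau(\mathbf{w})$ of an infinite word is obtained by applying $\tau$ letter by letter. *)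

(* Defs.v *)
From mathcomp Require Import all_boot.
Set Implicit Arguments. Unset Strict Implicit. Unset Printing Implicit Defensive.

(* Alphabet {0,1,#}: Some false = 0, Some true = 1, None = #. *)
Definition letter := option bool.
Definition word := seq letter.

Definition occ (x u : word) : nat :=
  count (fun i => take (size x) (drop i u) == x) (iota 0 (size u).+1).

Definition kab_equiv (k : nat) (u v : word) : Prop :=
  forall x : word, 0 < size x <= k -> occ x u = occ x v.

(* k-abelian power of exponent e and period m: the word flatten us,
   us = [u_0; ...; u_{e-1}], nonempty, |u_0| = m, u_0 ~k ... ~k u_{e-1}. *)
Definition kab_power (k e m : nat) (us : seq word) : Prop :=
  [/\ 0 < e, size us = e, flatten us != [::],
      size (nth [::] us 0) = m &
      forall i, i.+1 < e -> kab_equiv k (nth [::] us i) (nth [::] us i.+1)].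

Definition tau (k N : nat) (b : bool) : word :=
  None :: nseq (k - 2) (Some false) ++ nseq (N - 2 * k + 2) (Some b)
       ++ nseq (k - 1) (Some false).

Definition tau_inf (k N : nat) (w : nat -> bool) (n : nat) : letter :=
  nth None (tau k N (w (n %/ N))) (n %% N).

Definition occurs_in (u : word) (z : nat -> letter) : Prop :=
  exists p, u = mkseq (fun i => z (p + i)) (size u).

(* Main.v *)
Require Import Defs.
From mathcomp Require Import all_boot.
From mathcomp Require Import zify.
Lemma divq a N q : 0 < N -> q * N <= a < q.+1 * N -> a %/ N = q.
Proof.
move=> N0 /andP[h1 h2]; apply/eqP; rewrite eqn_leq.
by rewrite -ltnS ltn_divLR // h2 leq_divRL.
Qed.
Lemma cnt (N : nat) : 0 < N -> forall n, count (fun i => N %| i) (iota 0 n) = (n + N.-1) %/ N.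
Proof.
move=> N0; elim=> [|n IH]; first by rewrite /= divn_small // prednK.
rewrite -addn1 iotaD count_cat IH /= addn0.
rewrite add0n; have [q [r [rN ->]]] : exists q r, r < N /\ n = q * N + r.
  by exists (n %/ N), (n %% N); rewrite ltn_mod N0 -divn_eq.
case: (posnP r) => [->|rp].
  rewrite addn0 dvdn_mull // (divq _ _ q) ?(divq _ _ q.+1) //; nia.
have -> : (N %| q * N + r) = false.
  by apply/negbTE; rewrite dvdn_addr ?dvdn_mull // gtnNdvd.
rewrite (divq _ _ q.+1) ?(divq _ _ q.+1) //; nia.
Qed.

Lemma occ1 (a : letter) (u : word) : occ [:: a] u = count (pred1 a) u.
Proof.
rewrite /occ -addn1 iotaD count_cat /= add0n.
have -> : (take 1 (drop (size u) u) == [:: a]) = false by rewrite drop_size.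
rewrite -{3}(mkseq_nth None u) /mkseq count_map.
rewrite (@eq_in_count _ _ (preim (nth None u) (pred1 a))); first exact: addn0.
move=> i; rewrite mem_iota /= add0n => hi.
by rewrite (drop_nth None hi) /= take0 eqseq_cons andbT.
Qed.

Lemma size_cnt (u : word) : size u =
  count (pred1 None) u + count (pred1 (Some false)) u + count (pred1 (Some true)) u.
Proof. elim: u => [|[[]|] u IH] //=; rewrite IH; rewrite ?add0n ?addn0 ?addnS ?addSn ?addnA; congr (_.+1); lia. Qed.

Lemma tau_none k N w n : 2 <= k -> 2 * k - 1 <= N ->
  (tau_inf k N w n == None) = (N %| n).
Proof.
move=> hk hN; have N0 : 0 < N by lia.
rewrite /tau_inf /dvdn; case: (n %% N) (ltn_pmod n N0) => [|i] hi //=.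
set rest := (_ ++ _).
have nr : None \notin rest by rewrite /rest !mem_cat !mem_nseq !andbF.
have hs : i < size rest by rewrite /rest !size_cat !size_nseq; lia.
by apply/eqP => h; move: nr; rewrite -h mem_nth.
Qed.

Theorem lemma5 (k N : nat) (w : nat -> bool) (e m : nat) (us : seq word) :
  2 <= k -> 2 * k - 1 <= N ->
  N <= e -> kab_power k e m us ->
  occurs_in (flatten us) (tau_inf k N w) ->
  N %| m.
Proof.
move=> hk hN hNe [e0 hsz hne hm heq] [p hp].
have N0 : 0 < N by lia.
set c := count (pred1 None) (nth [::] us 0).
have hall : forall i, i < e -> forall a, count (pred1 a) (nth [::] us i) = count (pred1 a) (nth [::] us 0).
  elim=> [//|i IH] hi a; rewrite -IH; last by lia.
  by rewrite -!occ1 (heq i hi) //=; lia.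
have hsize : forall i, i < e -> size (nth [::] us i) = m.
  by move=> i hi; rewrite size_cnt !hall // -size_cnt.
have hF : forall j, j <= e -> size (flatten (take j us)) = j * m /\
    count (pred1 None) (flatten (take j us)) = j * c.
  elim=> [|j IH] hj; first by rewrite take0.
  have hj' : j < size us by rewrite hsz.
  rewrite (take_nth [::] hj') flatten_rcons size_cat count_cat.
  case: (IH (ltnW hj)) => -> ->; rewrite hsize // hall //; split; lia.
case: (hF N hNe) => hs hc.
have hfl : flatten us = flatten (take N us) ++ flatten (drop N us).
  by rewrite -flatten_cat cat_take_drop.
have : take (N * m) (flatten us) = flatten (take N us).
  by rewrite hfl -hs take_size_cat.
rewrite {1}hp /mkseq -map_take take_iota => ht.
have hle : N * m <= size (flatten us) by rewrite hfl size_cat hs leq_addr.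
rewrite (minn_idPl hle) in ht.
have : count (pred1 None) (flatten (take N us)) = m.
  rewrite -ht count_map.
  rewrite (eq_count (a2 := fun i => N %| p + i)); last first.
    by move=> i /=; rewrite tau_none.
  have := f_equal (count (fun i => N %| i)) (iotaD 0 p (N * m)).
  have eI : iota p (N * m) = map (addn p) (iota 0 (N * m)) by rewrite -iotaDl addn0.
  rewrite count_cat add0n eI count_map !cnt //.
  have -> : p + N * m + N.-1 = (p + N.-1) + m * N by lia.
  rewrite divnDMl // => h.
  have -> : count (fun i => N %| p + i) (iota 0 (N * m)) =
            count (preim (addn p) (fun i => N %| i)) (iota 0 (N * m)) by [].
  lia.
rewrite hc => <-; exact: dvdn_mulr.
Qed.
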